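(* Under the setting below, for every $\epsilon>0$ there exists a positive integer $T(\epsilon)$ such that for every profile $\boldsymbol{\Psi}=(\Psi_1,\dots,\Psi_N)$ of stationary policies, every initial distribution of the states, and every $i\in\{1,\dots,N\}$, $$\big|V_i(\boldsymbol{\Psi})-V_i^{T(\epsilon)}(\boldsymbol{\Psi})\big|<\epsilon,$$ where for a positive integer $T$, $$V_i^{T}(\boldsymbol{\Psi}):=\frac1T\sum_{t=1}^{T}\sum_{(\boldsymbol{s},\boldsymbol{a})}\mathbb{P}^{\Psi_i}_t(s_i,a_i)\,w_i\Big(\prod_{j\ne i}\mathbb{P}^{\Psi_j}_t(s_j,a_j)\Big)\,v_i\big(U_i(\boldsymbol a)\big)$$ is the average prospect payoff of prosumer $i$ over the first $T$ steps when all prosumers follow $\boldsymbol\Psi$.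
   Context: There are $N$ prosumers. Prosumer $i$ has state set $\mathcal{S}_i=\{0,\dots,S_i^{\max}\}$, action set $\mathcal{A}_i=\mathcal{L}_i\times\mathcal{D}_i$ with $\mathcal{L}_i=\{0,\dots,L_i^{\max}\}$, $\mathcal{D}_i=\{0,\dots,D_i^{\max}\}$, and state dynamics $S_i(t+1)=\min\{[S_i(t)+G_i(t)+D_i(t)-L_i(t)]^+,S_i^{\max}\}$ where $A_i(t)=(L_i(t),D_i(t))$, $[x]^+=\max\{0,x\}$, and in state $s$ only actions $(l,d)$ with $0\le s+d-l\le S_i^{\max}$ are taken. The processes $(G_i(t))_{t\ge1}$, $i=1,\dots,N$, are mutually independent, each i.i.d. and $\mathbb{Z}$-valued with law $G_i$, and $\lambda_i:=\min_{|k|\le S_i^{\max}}\mathbb{P}\{G_i=k\}>0$ for all $i$. A stationary policy $\Psi_i$ draws $A_i(t)$ from a distribution $\Psi_i(\cdot\mid S_i(t))$ depending only on the current state; under a profile of stationary policies the state-action processes of different prosumers are independent, and $\mathbb{P}^{\Psi_j}_t(s,a):=\mathbb{P}^{\Psi_j}\{S_j(t)=s,A_j(t)=a\}$. $U_i(\boldsymbol a)\in\mathbb{R}$ is prosumer $i$'s instantaneous payoff for the joint action $\boldsymbol a$; $w_i:[0,1]\to\mathbb{R}$ is a continuous weighting function and $v_i:\mathbb{R}\to\mathbb{R}$ a valuation function. For a profile of stationary policies, $V_i(\boldsymbol\Psi):=\lim_{T\to\infty}V_i^T(\boldsymbol\Psi)$ (this limit exists and equals $\sum_{(\boldsymbol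 s,\boldsymbol a)}\pi^{\Psi_i}(s_i)\Psi_i(a_i|s_i)\,w_i\big(\prod_{j\ne i}\Psi_j(a_j|s_j)\pi^{\Psi_j}(s_j)\big)v_i(U_i(\boldsymbol a))$, where $\pi^{\Psi_j}$ is the unique stationary distribution of prosumer $j$'s state chain under $\Psi_j$). The sums range over all joint states $\boldsymbol s\in\prod_j\mathcal{S}_j$ and joint actions $\boldsymbol a\in\prod_j\mathcal{A}_j$. *)

(* Defs.v *)
From Stdlib Require Import Reals ZArith.
From mathcomp Require Import ssreflect ssrfun ssrbool eqtype ssrnat seq
  choice fintype finfun bigop.
Set Implicit Arguments. Unset Strict Implicit. Unset Printing Implicit Defensive.

Definition State (Smax : nat) : finType := 'I_Smax.+1.
(* Action set A_j = L_j x D_j, with L_j = {0..Lmax j}, D_j = {0..Dmax j};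
   an action is a pair (l, d). *)
Definition Act (Lmax Dmax : nat) : finType := ('I_Lmax.+1 * 'I_Dmax.+1)%type.

Notation "\rsum_ ( i : T ) F" := (\big[Rplus/R0]_(i : T) F)
  (at level 41, F at level 41, i, T at level 50).

Definition admissible (Smax : nat) (s : nat) (l d : nat) : bool :=
  (l <= s + d)%N && (s + d - l <= Smax)%N.

Definition next_state (Smax : nat) (s l d : nat) (k : Z) : Z :=
  Z.min (Z.max 0 (Z.of_nat s + k + Z.of_nat d - Z.of_nat l)) (Z.of_nat Smax).

(* Enumeration of Z by nat-indexed pairs: k = n and k = -(n+1). *)
Definition Zsum_term (f : Z -> R) (n : nat) : R :=
  (f (Z.of_nat n) + f (- (Z.of_nat n + 1))%Z)%R.

Definition is_pmf_Z (g : Z -> R) : Prop :=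
  (forall k, 0 <= g k)%R /\ infinite_sum (Zsum_term g) 1%R.

(* One-step transition probability of the state chain of a prosumer:
   P{ S(t+1) = s' | S(t) = s, A(t) = (l,d) } = sum_k g(k) [next_state = s']. *)
Definition is_kernel (Smax Lmax Dmax : nat) (g : Z -> R)
    (K : State Smax -> Act Lmax Dmax -> State Smax -> R) : Prop :=
  forall (s : State Smax) (a : Act Lmax Dmax) (s' : State Smax),
    infinite_sum
      (Zsum_term (fun k =>
         if Z.eqb (next_state Smax s a.1 a.2 k) (Z.of_nat s') then g k else 0%R))
      (K s a s').

Definition is_distr (T : finType) (mu : T -> R) : Prop :=
  (forall x, 0 <= mu x)%R /\ \rsum_(x : T) mu x = 1%R.

Definition is_policy (Smax Lmax Dmax : nat)
    (Psi : State Smax -> Act Lmax Dmax -> R) : Prop :=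
  (forall s, is_distr (Psi s)) /\
  (forall (s : State Smax) (a : Act Lmax Dmax),
     ~~ admissible Smax s a.1 a.2 -> Psi s a = 0%R).

(* Distribution of S(t+1) (i.e. n = t, n = 0 is time 1) given the initial
   distribution mu0 of S(1). *)
Fixpoint state_distr (Smax Lmax Dmax : nat)
    (K : State Smax -> Act Lmax Dmax -> State Smax -> R)
    (Psi : State Smax -> Act Lmax Dmax -> R) (mu0 : State Smax -> R)
    (n : nat) : State Smax -> R :=
  match n with
  | O => mu0
  | S m => fun s' =>
      \rsum_(s : State Smax) \rsum_(a : Act Lmax Dmax)
        (state_distr K Psi mu0 m s * Psi s a * K s a s')%R
  end.

(* P^{Psi}_t(s,a) = P{S(t) = s, A(t) = a}, for t = n+1. *)
Definition sa_prob (Smax Lmax Dmax : nat)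
    (K : State Smax -> Act Lmax Dmax -> State Smax -> R)
    (Psi : State Smax -> Act Lmax Dmax -> R) (mu0 : State Smax -> R)
    (n : nat) (s : State Smax) (a : Act Lmax Dmax) : R :=
  (state_distr K Psi mu0 n s * Psi s a)%R.

Definition JointSA (N : nat) (Smax Lmax Dmax : 'I_N -> nat) : finType :=
  {dffun forall j : 'I_N, (State (Smax j) * Act (Lmax j) (Dmax j))%type}.
Definition JointAct (N : nat) (Lmax Dmax : 'I_N -> nat) : Type :=
  forall j : 'I_N, Act (Lmax j) (Dmax j).

Definition continuous_on_01 (w : R -> R) : Prop :=
  forall x, (0 <= x <= 1)%R -> forall eps, (0 < eps)%R ->
    exists delta, (0 < delta)%R /\
      forall y, (0 <= y <= 1)%R -> (Rabs (y - x) < delta)%R ->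
        (Rabs (w y - w x) < eps)%R.

Definition VT (N : nat) (Smax Lmax Dmax : 'I_N -> nat)
    (K : forall j : 'I_N, State (Smax j) -> Act (Lmax j) (Dmax j) -> State (Smax j) -> R)
    (U : 'I_N -> JointAct Lmax Dmax -> R)
    (w v : 'I_N -> R -> R)
    (Psi : forall j : 'I_N, State (Smax j) -> Act (Lmax j) (Dmax j) -> R)
    (mu0 : forall j : 'I_N, State (Smax j) -> R)
    (i : 'I_N) (T : nat) : R :=
  (/ INR T *
   \big[Rplus/R0]_(t < T)
     \rsum_(x : JointSA Smax Lmax Dmax)
       (sa_prob (K i) (Psi i) (mu0 i) t (x i).1 (x i).2 *
        w i (\big[Rmult/R1]_(j < N | j != i)
               sa_prob (K j) (Psi j) (mu0 j) t (x j).1 (x j).2) *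
        v i (U i (fun j => (x j).2))))%R.

(* Main.v *)
Require Import Defs.
From Stdlib Require Import Reals ZArith Lra Lia ClassicalEpsilon.
From HB Require Import structures.
From mathcomp Require Import ssreflect ssrfun ssrbool eqtype ssrnat seq
  choice fintype finfun bigop.

HB.instance Definition _ := Monoid.isComLaw.Build R R0 Rplus (fun a b c => esym (Rplus_assoc a b c)) Rplus_comm Rplus_0_l.
HB.instance Definition _ := Monoid.isComLaw.Build R R1 Rmult (fun a b c => esym (Rmult_assoc a b c)) Rmult_comm Rmult_1_l.

Open Scope R_scope.

Section Sums.
Variable T : finType.

Lemma rsum_le (f g : T -> R) : (forall x, f x <= g x) ->
  \rsum_(x : T) f x <= \rsum_(x : T) g x.
Proof. move=> H; apply: (big_ind2 (fun a b => a <= b)) => //; [lra|]. move=> *; lra. Qed.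

Lemma rsum_ge0 (f : T -> R) : (forall x, 0 <= f x) -> 0 <= \rsum_(x : T) f x.
Proof. move=> H; apply: (big_ind (fun a => 0 <= a)) => //; [lra|]. move=> *; lra. Qed.

Lemma rsum_abs (f : T -> R) : Rabs (\rsum_(x : T) f x) <= \rsum_(x : T) Rabs (f x).
Proof.
apply: (big_ind2 (fun a b => Rabs a <= b)); first by rewrite Rabs_R0; lra.
- move=> a b c d H1 H2; apply: Rle_trans (Rabs_triang _ _) _; lra.
- move=> x _; lra.
Qed.

Lemma rsum_scal (c : R) (f : T -> R) : \rsum_(x : T) (c * f x) = c * \rsum_(x : T) f x.
Proof.
apply: (big_rec2 (fun a b => a = c * b)); first by ring.
move=> i a b _ ->; ring.
Qed.

Lemma rsum_plus (f g : T -> R) : \rsum_(x : T) (f x + g x) = \rsum_(x : T) f x + \rsum_(x : T) g x.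
Proof. by rewrite big_split. Qed.

Lemma rsum_opp (f : T -> R) : \rsum_(x : T) (- f x) = - \rsum_(x : T) f x.
Proof.
apply: (big_rec2 (fun a b => a = - b)); first by ring.
move=> i a b _ ->; ring.
Qed.

Lemma rsum_const (c : R) : \rsum_(x : T) c = INR #|T| * c.
Proof.
rewrite big_const; elim: #|_| => [|n IH]; first by rewrite /=; ring.
rewrite [iter _ _ _]/= IH S_INR; ring.
Qed.

Lemma rsum_ext (f g : T -> R) : (forall x, f x = g x) -> \rsum_(x : T) f x = \rsum_(x : T) g x.
Proof. by move=> H; apply: eq_bigr => x _. Qed.

Lemma rsum_term_le (f : T -> R) (y : T) : (forall x, 0 <= f x) -> f y <= \rsum_(x : T) f x.
Proof.
move=> H; rewrite (bigD1 y) //=.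
have : 0 <= \big[Rplus/R0]_(i | i != y) f i.
  by apply: (big_ind (fun a => 0 <= a)) => //; [lra| move=> *; lra].
lra.
Qed.

Lemma rsum_delta (y : T) (c : R) : \rsum_(x : T) (if x == y then c else 0) = c.
Proof.
rewrite (bigD1 y) //= eqxx big1; first ring.
by move=> x /negbTE ->.
Qed.

End Sums.

Lemma rsum_exchange (T1 T2 : finType) (F : T1 -> T2 -> R) :
  \rsum_(x : T1) \rsum_(y : T2) F x y = \rsum_(y : T2) \rsum_(x : T1) F x y.
Proof. exact: exchange_big. Qed.

From Stdlib Require Import FunctionalExtensionality.
From mathcomp Require Import zify.

Lemma sumf_ge_term (f : nat -> R) (m n : nat) : (forall k, 0 <= f k) -> (m <= n)%N ->
  f m <= sum_f_R0 f n.
Proof.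
move=> H; elim: n => [|n IH] Hmn.
  by rewrite leqn0 in Hmn; move/eqP: Hmn => -> /=; lra.
rewrite leq_eqVlt in Hmn; case/orP: Hmn => [/eqP ->|Hmn].
  have : 0 <= sum_f_R0 f n.
    elim: (n) => [|k IHk] /=; [exact: H| have := H k.+1; lra].
  rewrite /=; lra.
have := IH Hmn; have := H n.+1; rewrite /=; lra.
Qed.

Lemma infsum_ge_term (f : nat -> R) l m : (forall k, 0 <= f k) -> infinite_sum f l -> f m <= l.
Proof.
move=> H Hs; apply: Rnot_lt_le => Hlt.
have [N HN] := Hs (f m - l) ltac:(lra).
have := HN (maxn N m) ltac:(apply/leP; exact: leq_maxl).
have := @sumf_ge_term f m (maxn N m) H (leq_maxr N m).
rewrite /Rdist => H1 H2.
have := Rle_abs (sum_f_R0 f (maxn N m) - l); lra.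
Qed.

Lemma infsum_ge0 (f : nat -> R) l : (forall k, 0 <= f k) -> infinite_sum f l -> 0 <= l.
Proof. move=> H Hs; have := @infsum_ge_term f l 0%N H Hs; have := H 0%N; lra. Qed.

Lemma infsum_seq (T : eqType) (r : seq T) (F : T -> nat -> R) (l : T -> R) :
  (forall x, infinite_sum (F x) (l x)) ->
  infinite_sum (fun n => \big[Rplus/R0]_(x <- r) F x n) (\big[Rplus/R0]_(x <- r) l x).
Proof.
move=> H; elim: r => [|a r IH].
  rewrite big_nil.
  have -> : (fun n : nat => \big[Rplus/R0]_(x <- [::]) F x n) = fun _ => 0.
    by apply: functional_extensionality => n; rewrite big_nil.
  move=> eps Heps; exists 0%N => n _.
  have -> : sum_f_R0 (fun _ => 0) n = 0 by elim: n => [|n IHn] //=; rewrite IHn; ring.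
  rewrite /Rdist Rminus_0_r Rabs_R0; lra.
rewrite big_cons.
have -> : (fun n : nat => \big[Rplus/R0]_(x <- (a :: r)) F x n) =
   fun n => F a n + \big[Rplus/R0]_(x <- r) F x n.
  by apply: functional_extensionality => n; rewrite big_cons.
change (Un_cv (fun n => sum_f_R0 (fun n => F a n + \big[Rplus/R0]_(x <- r) F x n) n)
   (l a + \big[Rplus/R0]_(x <- r) l x)).
have -> : (fun n => sum_f_R0 (fun n => F a n + \big[Rplus/R0]_(x <- r) F x n) n) =
  (fun n => sum_f_R0 (F a) n + sum_f_R0 (fun n => \big[Rplus/R0]_(x <- r) F x n) n).
  by apply: functional_extensionality => n; rewrite plus_sum.
exact: CV_plus (H a) IH.
Qed.

Lemma bigmin_le (T : eqType) (r : seq T) (F : T -> R) x : x \in r ->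
  \big[Rmin/1]_(i <- r) F i <= F x.
Proof.
elim: r => [|a r IH] //; rewrite in_cons big_cons; case/orP => [/eqP ->|Hx].
  exact: Rmin_l.
apply: Rle_trans (Rmin_r _ _) (IH Hx).
Qed.

Lemma bigmin_pos (T : Type) (r : seq T) (F : T -> R) : (forall i, 0 < F i) ->
  0 < \big[Rmin/1]_(i <- r) F i.
Proof.
move=> H; elim: r => [|a r IH]; rewrite ?big_nil ?big_cons; first lra.
exact: Rmin_glb_lt.
Qed.

Lemma bigmin_le1 (T : Type) (r : seq T) (F : T -> R) : \big[Rmin/1]_(i <- r) F i <= 1.
Proof.
elim: r => [|a r IH]; rewrite ?big_nil ?big_cons; first lra.
apply: Rle_trans (Rmin_r _ _) IH.
Qed.

Section Kernel.
Variables (Smax Lmax Dmax : nat) (g : Z -> R).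
Hypothesis Hg : is_pmf_Z g.
Variable K : State Smax -> Act Lmax Dmax -> State Smax -> R.
Hypothesis HK : is_kernel g K.

Let ind (s : State Smax) (a : Act Lmax Dmax) (s' : State Smax) :=
  fun k => if Z.eqb (next_state Smax s a.1 a.2 k) (Z.of_nat s') then g k else 0.

Lemma ind_ge0 s a s' k : 0 <= ind s a s' k.
Proof. rewrite /ind; case: Z.eqb; [exact: Hg.1 | lra]. Qed.

Lemma Zsum_term_ge0 (h : Z -> R) n : (forall k, 0 <= h k) -> 0 <= Zsum_term h n.
Proof. move=> H; rewrite /Zsum_term; have := H (Z.of_nat n); have := H (- (Z.of_nat n + 1))%Z; lra. Qed.

Lemma K_ge0 s a s' : 0 <= K s a s'.
Proof.
apply: (@infsum_ge0 _ _ _ (HK s a s')) => n; apply: Zsum_term_ge0 => k; exact: ind_ge0.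
Qed.

Lemma next_state_range s l d k : (0 <= next_state Smax s l d k <= Z.of_nat Smax)%Z.
Proof. rewrite /next_state; lia. Qed.

Lemma sum_ind s a k : \rsum_(s' : State Smax) ind s a s' k = g k.
Proof.
set z := next_state Smax s a.1 a.2 k.
have Hz : (0 <= z <= Z.of_nat Smax)%Z by apply: next_state_range.
pose y : State Smax := inord (Z.to_nat z).
have Hy : nat_of_ord y = Z.to_nat z.
  by rewrite /y inordK //; apply/ltP; lia.
rewrite -(@rsum_delta _ y (g k)); apply: rsum_ext => s'.
rewrite /ind -/z; case: Z.eqb_spec => H; case: eqP => H' //.
- by exfalso; apply: H'; apply: ord_inj; rewrite Hy H Nat2Z.id.
- by exfalso; apply: H; rewrite H' Hy Z2Nat.id //; lia.
Qed.

Lemma K_sum1 s a : \rsum_(s' : State Smax) K s a s' = 1.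
Proof.
have H1 := @infsum_seq _ (index_enum (State Smax)) _ _ (fun s' => HK s a s').
have H2 : (fun n => \big[Rplus/R0]_(x <- index_enum (State Smax))
               Zsum_term (ind s a x) n) = Zsum_term g.
  apply: functional_extensionality => n.
  rewrite /Zsum_term big_split /= -!(sum_ind s a) //.
rewrite /ind in H2; rewrite H2 in H1.
exact: uniqueness_sum H1 Hg.2.
Qed.

Lemma Zsum_ge_val (h : Z -> R) (k : Z) : (forall k, 0 <= h k) ->
  exists m, h k <= Zsum_term h m.
Proof.
move=> H; rewrite /Zsum_term.
case: (Z_le_gt_dec 0 k) => Hk.
  exists (Z.to_nat k); rewrite Z2Nat.id //; have := H (- (k + 1))%Z; lra.
exists (Z.to_nat (- k - 1)); rewrite Z2Nat.id; last lia.
have -> : (- (- k - 1 + 1))%Z = k by ring.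
have := H (- k - 1)%Z; lra.
Qed.

Lemma K_lb (s : State Smax) (a : Act Lmax Dmax) (s' : State Smax) :
  admissible Smax s a.1 a.2 ->
  g (Z.of_nat s' - Z.of_nat (s + a.2 - a.1))%Z <= K s a s'.
Proof.
rewrite /admissible => /andP [/leP H1 /leP H2].
set k := (Z.of_nat s' - Z.of_nat (s + a.2 - a.1))%Z.
have Hs' : (s' < Smax.+1)%N by exact: ltn_ord.
move/ltP: Hs' => Hs'.
have Hind : ind s a s' k = g k.
  rewrite /ind /next_state /k.
  have -> : (Z.min (Z.max 0 (Z.of_nat s + (Z.of_nat s' - Z.of_nat (s + a.2 - a.1)) +
     Z.of_nat a.2 - Z.of_nat a.1)) (Z.of_nat Smax)) = Z.of_nat s' by lia.
  by rewrite Z.eqb_refl.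
have [m Hm] := @Zsum_ge_val _ k (@ind_ge0 s a s').
rewrite -Hind; apply: Rle_trans Hm _.
apply: (@infsum_ge_term _ _ m _ (HK s a s')) => n; apply: Zsum_term_ge0 => k'; exact: ind_ge0.
Qed.

End Kernel.

Section Chain.
Variables (Smax Lmax Dmax : nat).
Variable K : State Smax -> Act Lmax Dmax -> State Smax -> R.
Variable Psi : State Smax -> Act Lmax Dmax -> R.
Variable lam : R.
Hypothesis HK0 : forall s a s', 0 <= K s a s'.
Hypothesis HK1 : forall s a, \rsum_(s' : State Smax) K s a s' = 1.
Hypothesis HKlb : forall (s : State Smax) (a : Act Lmax Dmax) (s' : State Smax), admissible Smax s a.1 a.2 -> lam <= K s a s'.
Hypothesis HPsi : is_policy Psi.
Hypothesis Hlam : 0 < lam <= 1.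

Definition Mk (s s' : State Smax) := \rsum_(a : Act Lmax Dmax) (Psi s a * K s a s').

Definition step (p : State Smax -> R) (s' : State Smax) :=
  \rsum_(s : State Smax) \rsum_(a : Act Lmax Dmax) (p s * Psi s a * K s a s').

Lemma step_eq p s' : step p s' = \rsum_(s : State Smax) (p s * Mk s s').
Proof.
apply: rsum_ext => s; rewrite /Mk -rsum_scal; apply: rsum_ext => a; ring.
Qed.

Lemma Psi_ge0 s a : 0 <= Psi s a.
Proof. by case: HPsi => H _; case: (H s) => H' _; apply: H'. Qed.

Lemma Psi_sum1 s : \rsum_(a : Act Lmax Dmax) Psi s a = 1.
Proof. by case: HPsi => H _; case: (H s). Qed.

Lemma Mk_sum1 s : \rsum_(s' : State Smax) Mk s s' = 1.
Proof.
rewrite /Mk rsum_exchange -(Psi_sum1 s); apply: rsum_ext => a.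
by rewrite rsum_scal HK1 Rmult_1_r.
Qed.

Lemma Mk_lb s s' : lam <= Mk s s'.
Proof.
have -> : lam = \rsum_(a : Act Lmax Dmax) (Psi s a * lam).
  rewrite (@rsum_ext _ _ (fun a => lam * Psi s a)); last by move=> a; ring.
  by rewrite rsum_scal Psi_sum1 Rmult_1_r.
apply: rsum_le => a.
case Ha: (admissible Smax s a.1 a.2).
  by apply: Rmult_le_compat_l; [exact: Psi_ge0 | exact: HKlb].
case: HPsi => _ H; rewrite H ?Ha //; lra.
Qed.

Lemma step_sum p : \rsum_(s' : State Smax) step p s' = \rsum_(s : State Smax) p s.
Proof.
under eq_bigr do rewrite step_eq.
rewrite rsum_exchange; apply: rsum_ext => s.
by rewrite rsum_scal Mk_sum1 Rmult_1_r.
Qed.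

Lemma step_ge0 p : (forall s, 0 <= p s) -> forall s', 0 <= step p s'.
Proof.
move=> H s'; rewrite /step; apply: rsum_ge0 => s; apply: rsum_ge0 => a.
apply: Rmult_le_pos; [apply: Rmult_le_pos; [exact: H | exact: Psi_ge0]| exact: HK0].
Qed.

Definition L1 (p q : State Smax -> R) := \rsum_(s : State Smax) Rabs (p s - q s).

Lemma contraction p q : \rsum_(s : State Smax) p s = \rsum_(s : State Smax) q s ->
  L1 (step p) (step q) <= (1 - lam) * L1 p q.
Proof.
move=> Hpq.
have E : forall s', step p s' - step q s' =
   \rsum_(s : State Smax) ((p s - q s) * (Mk s s' - lam)).
  move=> s'; rewrite !step_eq.
  rewrite [RHS](@rsum_ext _ _ (fun s => p s * Mk s s' + (- (q s * Mk s s') + (- lam) * (p s + - q s)))); last by move=> s; ring.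
  rewrite !rsum_plus rsum_scal rsum_plus !rsum_opp Hpq; ring.
have H1 : L1 (step p) (step q) <=
    \rsum_(s' : State Smax) \rsum_(s : State Smax) (Rabs (p s - q s) * (Mk s s' - lam)).
  apply: rsum_le => s'; rewrite E; apply: Rle_trans (rsum_abs _ _) _.
  apply: rsum_le => s; rewrite Rabs_mult (Rabs_right (Mk s s' - lam)); first lra.
  have := Mk_lb s s'; lra.
apply: Rle_trans H1 _; rewrite rsum_exchange /L1 -rsum_scal.
apply: rsum_le => s.
rewrite rsum_scal rsum_plus Mk_sum1 rsum_const card_ord.
have := Rabs_pos (p s - q s).
have : 1 <= INR Smax.+1 by rewrite S_INR; have := pos_INR Smax; lra.
move=> Hn Ha.
have : lam <= INR Smax.+1 * lam by nra.
nra.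
Qed.

Lemma sd_shift mu m t s : state_distr K Psi mu (t + m) s = state_distr K Psi (state_distr K Psi mu m) t s.
Proof.
elim: t s => [|t IH] s //=.
apply: rsum_ext => s0; apply: rsum_ext => a; by rewrite IH.
Qed.

Lemma sd_distr mu n : is_distr mu -> is_distr (state_distr K Psi mu n).
Proof.
move=> Hmu; elim: n => [|n [IH1 IH2]] //; split.
- move=> s'; exact: (@step_ge0 _ IH1 s').
- by rewrite -IH2; exact: step_sum.
Qed.

Lemma L1_le2 p q : is_distr p -> is_distr q -> L1 p q <= 2.
Proof.
move=> [Hp1 Hp2] [Hq1 Hq2]; rewrite /L1.
apply: Rle_trans (_ : _ <= \rsum_(s : State Smax) (p s + q s)) _.
  apply: rsum_le => s; have := Hp1 s; have := Hq1 s.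
  move=> *; apply: Rle_trans (Rabs_triang _ _) _; rewrite Rabs_Ropp !Rabs_right; lra.
rewrite rsum_plus Hp2 Hq2; lra.
Qed.

Lemma sd_L1 mu1 mu2 t : is_distr mu1 -> is_distr mu2 ->
  L1 (state_distr K Psi mu1 t) (state_distr K Psi mu2 t) <= (1 - lam) ^ t * L1 mu1 mu2.
Proof.
move=> H1 H2; elim: t => [|t IH]; first by rewrite /=; lra.
have [_ E1] := @sd_distr _ t H1; have [_ E2] := @sd_distr _ t H2.
apply: Rle_trans (contraction _ _ _) _; first by rewrite E1 E2.
rewrite /=; have : 0 <= 1 - lam by lra.
move=> h; rewrite Rmult_assoc; exact: Rmult_le_compat_l.
Qed.

Lemma L1_entry p q s : Rabs (p s - q s) <= L1 p q.
Proof. apply: (@rsum_term_le _ (fun s => Rabs (p s - q s))) => x; exact: Rabs_pos. Qed.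

Lemma sd_cauchy mu t t' s : is_distr mu -> (t <= t')%N ->
  Rabs (state_distr K Psi mu t s - state_distr K Psi mu t' s) <= 2 * (1 - lam) ^ t.
Proof.
move=> Hmu Htt.
have -> : state_distr K Psi mu t' s = state_distr K Psi (state_distr K Psi mu (t' - t)) t s.
  by rewrite -sd_shift subnKC.
apply: Rle_trans (L1_entry _ _ s) _.
apply: Rle_trans (@sd_L1 _ _ _ Hmu (@sd_distr _ _ Hmu)) _.
have := @L1_le2 _ _ Hmu (@sd_distr _ (t' - t) Hmu).
have : 0 <= (1 - lam) ^ t by apply: pow_le; lra.
nra.
Qed.

End Chain.

Lemma big_ord_recR (F : nat -> R) T : \big[Rplus/R0]_(t < T.+1) F t = \big[Rplus/R0]_(t < T) F t + F T.
Proof. by rewrite big_ord_recr. Qed.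

Lemma big_ord_sub (F : nat -> R) c T : \big[Rplus/R0]_(t < T) (F t - c) = \big[Rplus/R0]_(t < T) F t - INR T * c.
Proof.
elim: T => [|T IH]; first by rewrite !big_ord0 /=; ring.
rewrite (big_ord_recR (fun t => F t - c)) (big_ord_recR F) IH S_INR; ring.
Qed.

Lemma big_ord_abs (F : nat -> R) T : Rabs (\big[Rplus/R0]_(t < T) F t) <= \big[Rplus/R0]_(t < T) Rabs (F t).
Proof.
elim: T => [|T IH]; first by rewrite !big_ord0 Rabs_R0; lra.
rewrite (big_ord_recR F) (big_ord_recR (fun t => Rabs (F t))).
apply: Rle_trans (Rabs_triang _ _) _; lra.
Qed.

Section Cesaro.
Variable f : nat -> R.
Variables (B delta : R) (M : nat).
Hypothesis HB : forall t, Rabs (f t) <= B.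
Hypothesis Hd : forall t : nat, (M <= t)%N -> Rabs (f t - f M) <= delta.

Lemma delta_ge0 : 0 <= delta.
Proof. have := @Hd M (leqnn M); have := Rabs_pos (f M - f M); lra. Qed.

Lemma sum_dev T : \big[Rplus/R0]_(t < T) Rabs (f t - f M) <= 2 * B * INR (minn T M) + delta * INR T.
Proof.
have Hd0 := delta_ge0.
elim: T => [|T IH]; first by rewrite big_ord0 min0n /=; have := Rabs_pos (f 0%N); have := HB 0%N; nra.
rewrite (big_ord_recR (fun t => Rabs (f t - f M))).
have Hfm : Rabs (f T - f M) <= 2 * B.
  apply: Rle_trans (Rabs_triang _ _) _; rewrite Rabs_Ropp; have := HB T; have := HB M; lra.
case: (ltnP T M) => h.
  have -> : minn T.+1 M = T.+1 by apply/minn_idPl.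
  have E : minn T M = T by apply/minn_idPl; apply: ltnW.
  rewrite E in IH; rewrite !S_INR; lra.
have -> : minn T.+1 M = M by apply/minn_idPr; apply: (leq_trans h).
have E : minn T M = M by apply/minn_idPr.
rewrite E in IH; have := @Hd T h; rewrite S_INR; lra.
Qed.

Lemma avg_close T : (0 < T)%N ->
  Rabs (/ INR T * \big[Rplus/R0]_(t < T) f t - f M) <= delta + 2 * B * INR M / INR T.
Proof.
move=> HT.
have HTp : 0 < INR T by apply: lt_0_INR; apply/ltP.
have HB0 : 0 <= B by have := HB 0%N; have := Rabs_pos (f 0%N); lra.
have E : / INR T * \big[Rplus/R0]_(t < T) f t - f M =
   / INR T * \big[Rplus/R0]_(t < T) (f t - f M).
  rewrite big_ord_sub; field; lra.
rewrite E Rabs_mult Rabs_Rinv; last lra.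
rewrite (Rabs_right (INR T)); last lra.
have H1 := big_ord_abs (fun t => f t - f M) T.
have H2 := sum_dev T.
have H3 : INR (minn T M) <= INR M by apply: le_INR; apply/leP; exact: geq_minr.
apply: Rle_trans (_ : _ <= / INR T * (2 * B * INR M + delta * INR T)) _.
  apply: Rmult_le_compat_l; first by left; apply: Rinv_0_lt_compat.
  have : 2 * B * INR (minn T M) <= 2 * B * INR M by nra.
  lra.
apply: Req_le; field; lra.
Qed.

Lemma lim_close Vi : Un_cv (fun T => / INR (S T) * \big[Rplus/R0]_(t < S T) f t) Vi ->
  Rabs (Vi - f M) <= delta.
Proof.
move=> Hcv; apply: Rnot_lt_le => Hlt.
set e := Rabs (Vi - f M) - delta.
have He : 0 < e by rewrite /e; lra.
have HB0 : 0 <= B by have := HB 0%N; have := Rabs_pos (f 0%N); lra.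
have [N1 [HN1 HN1p]] := archimed_cor1 (e / (2 * (2 * B * INR M + 1))) ltac:(
  apply: Rdiv_lt_0_compat => //; have := pos_INR M; nra).
have [N2 HN2] := Hcv (e / 2) ltac:(lra).
set T := maxn N1 N2.
have HT2 := HN2 T ltac:(apply/leP; exact: leq_maxr).
have HA := @avg_close T.+1 (ltn0Sn T).
rewrite /Rdist in HT2.
have HT1 : INR N1 <= INR T.+1.
  apply: le_INR; apply/leP; apply: leq_trans (leq_maxl N1 N2) (leqnSn _).
have HN1pos : 0 < INR N1 by apply: lt_0_INR.
have Hsmall : 2 * B * INR M / INR T.+1 < e / 2.
  have HM := pos_INR M.
  have Hinv : / INR T.+1 <= / INR N1 by apply: Rinv_le_contravar.
  have HK : 0 <= 2 * B * INR M by nra.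
  have : 2 * B * INR M * / INR T.+1 <= 2 * B * INR M * / INR N1 by nra.
  have : 2 * B * INR M * / INR N1 <= 2 * B * INR M * (e / (2 * (2 * B * INR M + 1))) by nra.
  have : 2 * B * INR M * (e / (2 * (2 * B * INR M + 1))) < e / 2.
    apply: (Rmult_lt_reg_r (2 * (2 * B * INR M + 1))); first nra.
    field_simplify; nra.
  rewrite /Rdiv; lra.
have := Rabs_triang (Vi - / INR T.+1 * \big[Rplus/R0]_(t < T.+1) f t)
                    (/ INR T.+1 * \big[Rplus/R0]_(t < T.+1) f t - f M).
rewrite -Rabs_Ropp Ropp_minus_distr in HT2.
rewrite /e in Hsmall He *.
have -> : Vi - / INR T.+1 * \big[Rplus/R0]_(t < T.+1) f t +
          (/ INR T.+1 * \big[Rplus/R0]_(t < T.+1) f t - f M) = Vi - f M by ring.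
move=> Htri; rewrite /e in HT2; lra.
Qed.

Lemma cesaro Vi T0 : Un_cv (fun T => / INR (S T) * \big[Rplus/R0]_(t < S T) f t) Vi ->
  (0 < T0)%N ->
  Rabs (Vi - / INR T0 * \big[Rplus/R0]_(t < T0) f t) <= 2 * delta + 2 * B * INR M / INR T0.
Proof.
move=> Hcv HT0.
have H1 := @lim_close Vi Hcv; have H2 := @avg_close T0 HT0.
set A := / INR T0 * \big[Rplus/R0]_(t < T0) f t.
have E1 : Vi - A = (Vi - f M) + - (A - f M) by ring.
rewrite E1; apply: Rle_trans (Rabs_triang _ _) _; rewrite Rabs_Ropp. have H2' : Rabs (A - f M) <= delta + 2 * B * INR M / INR T0 := H2. lra.
Qed.
End Cesaro.

Section Main.
Variables (N : nat) (Smax Lmax Dmax : 'I_N -> nat) (g : 'I_N -> Z -> R).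
Hypothesis Hg : forall i, is_pmf_Z (g i).
Hypothesis Hlambda : forall i (k : Z), (Z.abs k <= Z.of_nat (Smax i))%Z -> (0 < g i k)%R.
Variable K : forall j : 'I_N, State (Smax j) -> Act (Lmax j) (Dmax j) -> State (Smax j) -> R.
Hypothesis HK : forall j, is_kernel (g j) (K j).

Definition lam_all := \big[Rmin/1]_(j <- index_enum 'I_N)
   \big[Rmin/1]_(k <- index_enum 'I_(2 * Smax j).+1) g j (Z.of_nat k - Z.of_nat (Smax j))%Z.

Lemma lam_pos : 0 < lam_all.
Proof.
apply: bigmin_pos => j; apply: bigmin_pos => k; apply: Hlambda.
have := ltn_ord k; move=> /ltP; lia.
Qed.

Lemma lam_le1 : lam_all <= 1.
Proof. exact: bigmin_le1. Qed.

Lemma K_lam j (s : State (Smax j)) (a : Act (Lmax j) (Dmax j)) (s' : State (Smax j)) : admissible (Smax j) s a.1 a.2 -> lam_all <= K j s a s'.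
Proof.
move=> Had.
have HKl := @K_lb _ _ _ (g j) (Hg j) (K j) (HK j) s a s' Had.
apply: Rle_trans HKl.
apply: Rle_trans (@bigmin_le _ _ _ j (mem_index_enum j)) _.
move: Had; rewrite /admissible => /andP [/leP H1 /leP H2].
have Hs' : (s' < (Smax j).+1)%N by exact: ltn_ord.
move/ltP: Hs' => Hs'.
set kk := (Z.of_nat s' - Z.of_nat (s + a.2 - a.1))%Z.
pose m : 'I_(2 * Smax j).+1 := inord (Z.to_nat (kk + Z.of_nat (Smax j))).
have Hm : nat_of_ord m = Z.to_nat (kk + Z.of_nat (Smax j)).
  rewrite /m inordK //; apply/ltP; rewrite /kk; lia.
apply: Rle_trans (@bigmin_le _ _ _ m (mem_index_enum m)) _.
rewrite Hm Z2Nat.id; last by rewrite /kk; lia.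
have -> : (kk + Z.of_nat (Smax j) - Z.of_nat (Smax j))%Z = kk by ring.
lra.
Qed.

Lemma distr_le1 (T : finType) (mu : T -> R) : is_distr mu -> forall x, 0 <= mu x <= 1.
Proof.
move=> [H0 H1] x; split; first exact: H0.
rewrite -H1; exact: (@rsum_term_le _ _ x H0).
Qed.

Lemma sa01 j (Pj : State (Smax j) -> Act (Lmax j) (Dmax j) -> R) (mj : State (Smax j) -> R) :
  is_policy Pj -> is_distr mj -> forall t s a, 0 <= sa_prob (K j) Pj mj t s a <= 1.
Proof.
move=> HP Hm t s a; rewrite /sa_prob.
have Hd := @sd_distr _ _ _ (K j) Pj (@K_ge0 _ _ _ (g j) (Hg j) (K j) (HK j))
   (@K_sum1 _ _ _ (g j) (Hg j) (K j) (HK j)) HP mj t Hm.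
have [h1 h2] := @distr_le1 _ _ Hd s.
have [h3 h4] : 0 <= Pj s a <= 1.
  case: HP => HP _; exact: (@distr_le1 _ _ (HP s) a).
split; nra.
Qed.

Lemma sa_cauchy j (Pj : State (Smax j) -> Act (Lmax j) (Dmax j) -> R) (mj : State (Smax j) -> R) :
  is_policy Pj -> is_distr mj -> forall t t' s a, (t <= t')%N ->
  Rabs (sa_prob (K j) Pj mj t s a - sa_prob (K j) Pj mj t' s a) <= 2 * (1 - lam_all) ^ t.
Proof.
move=> HP Hm t t' s a Htt; rewrite /sa_prob.
have Hc := @sd_cauchy _ _ _ (K j) Pj lam_all (@K_ge0 _ _ _ (g j) (Hg j) (K j) (HK j))
   (@K_sum1 _ _ _ (g j) (Hg j) (K j) (HK j)) (@K_lam j) HP (conj lam_pos lam_le1) mj t t' s Hm Htt.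
have [h3 h4] : 0 <= Pj s a <= 1.
  case: HP => HP _; exact: (@distr_le1 _ _ (HP s) a).
rewrite -Rmult_minus_distr_r Rabs_mult (Rabs_right (Pj s a)); last lra.
have := Rabs_pos (state_distr (K j) Pj mj t s - state_distr (K j) Pj mj t' s).
nra.
Qed.


Lemma prod_close (I : finType) (P : pred I) (a b : I -> R) (eta : R) :
  (forall i, 0 <= a i <= 1) -> (forall i, 0 <= b i <= 1) ->
  (forall i, Rabs (a i - b i) <= eta) -> 0 <= eta ->
  (0 <= \big[Rmult/R1]_(i | P i) a i <= 1) /\
  Rabs (\big[Rmult/R1]_(i | P i) a i - \big[Rmult/R1]_(i | P i) b i) <= INR #|I| * eta.
Proof.
move=> Ha Hb Hab He.
have H : (0 <= \big[Rmult/R1]_(i | P i) a i <= 1) /\ (0 <= \big[Rmult/R1]_(i | P i) b i <= 1) /\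
   Rabs (\big[Rmult/R1]_(i | P i) a i - \big[Rmult/R1]_(i | P i) b i) <=
   \big[Rplus/R0]_(i | P i) eta.
  apply: (big_rec3 (fun x y z => (0 <= x <= 1) /\ (0 <= y <= 1) /\ Rabs (x - y) <= z)).
    by rewrite Rminus_diag Rabs_R0; lra.
  move=> i x y z _ [Hx [Hy Hz]]; have := Ha i; have := Hb i; have := Hab i => h1 h2 h3.
  split; [nra|split; [nra|]].
  have -> : a i * x - b i * y = (a i - b i) * x + b i * (x - y) by ring.
  apply: Rle_trans (Rabs_triang _ _) _; rewrite !Rabs_mult (Rabs_right x) ?(Rabs_right (b i)); try lra.
  have := Rabs_pos (a i - b i); have := Rabs_pos (x - y); nra.
case: H => [H1 [_ H3]]; split => //.
apply: Rle_trans H3 _.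
rewrite big_mkcond -rsum_const; apply: rsum_le => i; case: (P i); lra.
Qed.

Definition clamp01 (y : R) := Rmax 0 (Rmin 1 y).

Lemma clamp01_in y : 0 <= clamp01 y <= 1.
Proof. rewrite /clamp01 /Rmax /Rmin; repeat case: Rle_dec; lra. Qed.

Lemma clamp01_id y : 0 <= y <= 1 -> clamp01 y = y.
Proof. rewrite /clamp01 /Rmax /Rmin; repeat case: Rle_dec; lra. Qed.

Lemma clamp01_lip x y : Rabs (clamp01 y - clamp01 x) <= Rabs (y - x).
Proof. rewrite /clamp01 /Rmax /Rmin; repeat case: Rle_dec; split_Rabs; lra. Qed.

Lemma clamp_cont (w0 : R -> R) : continuous_on_01 w0 -> forall x, continuity_pt (fun y => w0 (clamp01 y)) x.
Proof.
move=> Hw x eps Heps.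
have [delta [Hd H]] := Hw (clamp01 x) (clamp01_in x) eps Heps.
exists delta; split => // y [_ Hy].
rewrite /R_dist /= in Hy *.
have := H (clamp01 y) (clamp01_in y).
have := clamp01_lip x y; rewrite /Rdist in Hy * => h1 h2.
apply: h2; lra.
Qed.

Lemma w_bound (w0 : R -> R) : continuous_on_01 w0 ->
  exists Wb, 0 <= Wb /\ forall y, 0 <= y <= 1 -> Rabs (w0 y) <= Wb.
Proof.
move=> Hw.
have Hc : forall c, 0 <= c <= 1 -> continuity_pt (fun y => w0 (clamp01 y)) c.
  by move=> c _; apply: clamp_cont.
have [Mx [HM _]] := continuity_ab_maj (fun y => w0 (clamp01 y)) 0 1 ltac:(lra) Hc.
have [mx [Hm _]] := continuity_ab_min (fun y => w0 (clamp01 y)) 0 1 ltac:(lra) Hc.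
exists (Rabs (w0 (clamp01 Mx)) + Rabs (w0 (clamp01 mx))); split.
  have := Rabs_pos (w0 (clamp01 Mx)); have := Rabs_pos (w0 (clamp01 mx)); lra.
move=> y Hy; have := HM y Hy; have := Hm y Hy; rewrite /= (@clamp01_id y Hy).
move=> h1 h2; split_Rabs; lra.
Qed.

Lemma w_unif (w0 : R -> R) : continuous_on_01 w0 -> forall eps, 0 < eps ->
  exists delta, 0 < delta /\ forall x y, 0 <= x <= 1 -> 0 <= y <= 1 ->
    Rabs (x - y) < delta -> Rabs (w0 x - w0 y) < eps.
Proof.
move=> Hw eps Heps.
have Hc : forall c, 0 <= c <= 1 -> continuity_pt (fun y => w0 (clamp01 y)) c.
  by move=> c _; apply: clamp_cont.
have [delta Hd] := Heine_cor2 Hc (mkposreal eps Heps).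
exists delta; split; first exact: cond_pos.
move=> x y Hx Hy Hxy; have := Hd x y Hx Hy Hxy.
by rewrite /= !clamp01_id.
Qed.

Lemma prod01 (I : finType) (P : pred I) (a : I -> R) :
  (forall i, 0 <= a i <= 1) -> 0 <= \big[Rmult/R1]_(i | P i) a i <= 1.
Proof.
move=> Ha; apply: (big_ind (fun x => 0 <= x <= 1)); first lra.
- move=> x y hx hy; nra.
- move=> j _; exact: Ha.
Qed.

Variable U : 'I_N -> JointAct Lmax Dmax -> R.
Variables w v : 'I_N -> R -> R.
Hypothesis Hw : forall i, continuous_on_01 (w i).

Lemma per_i (i : 'I_N) eps : 0 < eps -> exists Ti : nat, forall T0, (Ti <= T0)%N -> (0 < T0)%N ->
  forall (Psi : forall j : 'I_N, State (Smax j) -> Act (Lmax j) (Dmax j) -> R)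
         (mu0 : forall j : 'I_N, State (Smax j) -> R),
  (forall j, is_policy (Psi j)) -> (forall j, is_distr (mu0 j)) ->
  forall Vi, Un_cv (fun T => VT K U w v Psi mu0 i (S T)) Vi ->
  Rabs (Vi - VT K U w v Psi mu0 i T0) < eps.
Proof.
move=> Heps.
have [Wb [HWb0 HWb]] := @w_bound _ (Hw i).
set Vs := \rsum_(x : JointSA Smax Lmax Dmax) Rabs (v i (U i (fun j => (x j).2))).
have HVx : forall x : JointSA Smax Lmax Dmax, Rabs (v i (U i (fun j => (x j).2))) <= Vs.
  move=> x; apply: (@rsum_term_le _ (fun x : JointSA Smax Lmax Dmax => Rabs (v i (U i (fun j => (x j).2))))).
  move=> y; exact: Rabs_pos.
have HVs0 : 0 <= Vs by apply: rsum_ge0 => x; exact: Rabs_pos.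
set nX := INR #|JointSA Smax Lmax Dmax|.
have HnX : 0 <= nX by apply: pos_INR.
set A := (nX + 1) * (Wb + 1) * (Vs + 1).
have HA : 0 < A by rewrite /A; apply: Rmult_lt_0_compat; [apply: Rmult_lt_0_compat|]; lra.
set ew := eps / (4 * A).
have Hew : 0 < ew by rewrite /ew; apply: Rdiv_lt_0_compat; lra.
have [dw [Hdw Hunif]] := @w_unif _ (Hw i) _ Hew.
have HN0 := pos_INR N.
set eta := Rmin ew (dw / (INR N + 1)).
have Heta : 0 < eta by apply: Rmin_glb_lt => //; apply: Rdiv_lt_0_compat; lra.
have Heta1 : eta <= ew by apply: Rmin_l.
have Heta2 : INR N * eta < dw.
  have : eta <= dw / (INR N + 1) by apply: Rmin_r.
  move=> h; have : INR N * eta <= INR N * (dw / (INR N + 1)) by nra.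
  have : INR N * (dw / (INR N + 1)) < dw.
    apply: (Rmult_lt_reg_r (INR N + 1)); first lra.
    field_simplify; lra.
  lra.
have Hlam := lam_pos; have Hlam1 := lam_le1.
have Hc : Rabs (1 - lam_all) < 1 by rewrite Rabs_right; lra.
have [M HM] := @pow_lt_1_zero _ Hc (eta / 2) ltac:(lra).
have HcM : 2 * (1 - lam_all) ^ M < eta.
  have := HM M (le_n M); rewrite Rabs_right; first lra.
  apply: Rle_ge; apply: pow_le; lra.
set B := nX * (Wb * Vs).
have HB0 : 0 <= B by rewrite /B; apply: Rmult_le_pos => //; nra.
have HM0 := pos_INR M.
have [Nn [HNn HNnp]] := archimed_cor1 (eps / (4 * (2 * B * INR M + 1)))
   ltac:(apply: Rdiv_lt_0_compat; nra).
exists Nn => T0 HT0 HT0p Psi mu0 HPsi Hmu Vi Hcv.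
pose a t (x : JointSA Smax Lmax Dmax) := sa_prob (K i) (Psi i) (mu0 i) t (x i).1 (x i).2.
pose q t (x : JointSA Smax Lmax Dmax) := \big[Rmult/R1]_(j < N | j != i)
        sa_prob (K j) (Psi j) (mu0 j) t (x j).1 (x j).2.
pose V (x : JointSA Smax Lmax Dmax) := v i (U i (fun j => (x j).2)).
pose tm t x := a t x * w i (q t x) * V x.
pose f t := \rsum_(x : JointSA Smax Lmax Dmax) tm t x.
have Ha01 : forall t x, 0 <= a t x <= 1.
  by move=> t x; apply: sa01.
have Hq01 : forall t x, 0 <= q t x <= 1.
  move=> t x; apply: prod01 => j; exact: sa01.
have Hfb : forall t, Rabs (f t) <= B.
  move=> t; apply: Rle_trans (rsum_abs _ _) _.
  rewrite /B /nX -rsum_const; apply: rsum_le => x.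
  rewrite /tm Rabs_mult Rabs_mult.
  have := Ha01 t x; have := HWb _ (Hq01 t x); have := HVx x.
  rewrite -/(V x) => h1 h2 h3.
  rewrite (Rabs_right (a t x)); last lra.
  have hw := Rabs_pos (w i (q t x)); have hv := Rabs_pos (V x).
  have hp : Rabs (w i (q t x)) * Rabs (V x) <= Wb * Vs by apply: Rmult_le_compat.
  rewrite Rmult_assoc; have : 0 <= Wb * Vs by nra. nra.
have Hfd : forall t : nat, (M <= t)%N -> Rabs (f t - f M) <= eps / 4.
  move=> t Ht.
  have E : f t - f M = \rsum_(x : JointSA Smax Lmax Dmax) (tm t x + - tm M x).
    by rewrite rsum_plus rsum_opp.
  rewrite E; apply: Rle_trans (rsum_abs _ _) _.
  apply: Rle_trans (_ : _ <= \rsum_(x : JointSA Smax Lmax Dmax) ((eta * Wb + ew) * Vs)) _.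
    apply: rsum_le => x.
    have Hda : Rabs (a t x - a M x) <= eta.
      rewrite Rabs_minus_sym; apply: Rle_trans (@sa_cauchy _ _ _ (HPsi i) (Hmu i) _ _ _ _ Ht) _; lra.
    have [_ Hdq] := @prod_close _ (fun j => j != i)
       (fun j => sa_prob (K j) (Psi j) (mu0 j) t (x j).1 (x j).2)
       (fun j => sa_prob (K j) (Psi j) (mu0 j) M (x j).1 (x j).2)
       (2 * (1 - lam_all) ^ M)
       (fun j => @sa01 _ _ _ (HPsi j) (Hmu j) _ _ _)
       (fun j => @sa01 _ _ _ (HPsi j) (Hmu j) _ _ _)
       (fun j => ltac:(rewrite Rabs_minus_sym; exact: (@sa_cauchy _ _ _ (HPsi j) (Hmu j) _ _ _ _ Ht)))
       ltac:(apply: Rmult_le_pos; [lra| apply: pow_le; lra]).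
    rewrite card_ord in Hdq.
    have Hdq' : Rabs (q t x - q M x) < dw.
      apply: Rle_lt_trans Hdq _; have : INR N * (2 * (1 - lam_all) ^ M) <= INR N * eta by nra.
      lra.
    have Hdw' := Hunif _ _ (Hq01 t x) (Hq01 M x) Hdq'.
    have Hwt := HWb _ (Hq01 t x).
    have HV := HVx x; rewrite -/(V x) in HV.
    have -> : tm t x + - tm M x = ((a t x - a M x) * w i (q t x) + a M x * (w i (q t x) - w i (q M x))) * V x.
      by rewrite /tm; ring.
    rewrite Rabs_mult; apply: Rmult_le_compat; try exact: Rabs_pos; last exact: HV.
    apply: Rle_trans (Rabs_triang _ _) _; rewrite (Rabs_mult (a t x - a M x)) (Rabs_mult (a M x)).
    have := Ha01 M x => hM.
    rewrite (Rabs_right (a M x)); last lra.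
    have h0 := Rabs_pos (a t x - a M x); have h0' := Rabs_pos (w i (q t x) - w i (q M x)).
    have h0'' := Rabs_pos (w i (q t x)).
    have e1 : Rabs (a t x - a M x) * Rabs (w i (q t x)) <= eta * Wb by apply: Rmult_le_compat.
    have e2 : a M x * Rabs (w i (q t x) - w i (q M x)) <= ew by nra.
    lra.
  rewrite rsum_const -/nX.
  have h1 : eta * Wb + ew <= ew * (Wb + 1) by nra.
  have h2 : nX * ((eta * Wb + ew) * Vs) <= ew * A.
    have X0 : 0 <= (eta * Wb + ew) by nra.
    have Y0 : 0 <= ew * (Wb + 1) by nra.
    have s1 : (eta * Wb + ew) * Vs <= ew * (Wb + 1) * (Vs + 1).
      apply: Rle_trans (_ : _ <= ew * (Wb + 1) * Vs) _; [apply: Rmult_le_compat_r => // | nra].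
    have s2 : nX * ((eta * Wb + ew) * Vs) <= (nX + 1) * (ew * (Wb + 1) * (Vs + 1)).
      apply: Rmult_le_compat => //; [nra| lra].
    have -> : ew * A = (nX + 1) * (ew * (Wb + 1) * (Vs + 1)) by rewrite /A; ring.
    exact: s2.
  have : ew * A = eps / 4 by rewrite /ew; field; lra.
  lra.
have Hces := @cesaro f B (eps / 4) M Hfb Hfd Vi T0 Hcv HT0p.
have Hsmall : 2 * B * INR M / INR T0 < eps / 2.
  have HT1 : INR Nn <= INR T0 by apply: le_INR; apply/leP.
  have HNpos : 0 < INR Nn by apply: lt_0_INR.
  have Hinv : / INR T0 <= / INR Nn by apply: Rinv_le_contravar.
  have HK2 : 0 <= 2 * B * INR M by nra.
  have : 2 * B * INR M * / INR T0 <= 2 * B * INR M * / INR Nn by nra.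
  have : 2 * B * INR M * / INR Nn <= 2 * B * INR M * (eps / (4 * (2 * B * INR M + 1))) by nra.
  have : 2 * B * INR M * (eps / (4 * (2 * B * INR M + 1))) < eps / 2.
    apply: (Rmult_lt_reg_r (4 * (2 * B * INR M + 1))); first nra.
    field_simplify; nra.
  rewrite /Rdiv; lra.
have Hfin : Rabs (Vi - VT K U w v Psi mu0 i T0) <= 2 * (eps / 4) + 2 * B * INR M / INR T0 := Hces.
lra.
Qed.

End Main.

Theorem lemma2
  (N : nat) (Smax Lmax Dmax : 'I_N -> nat)
  (g : 'I_N -> Z -> R)
  (Hg : forall i, is_pmf_Z (g i))
  (Hlambda : forall i (k : Z), (Z.abs k <= Z.of_nat (Smax i))%Z -> (0 < g i k)%R)
  (K : forall j : 'I_N, State (Smax j) -> Act (Lmax j) (Dmax j) -> State (Smax j) -> R)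
  (HK : forall j, is_kernel (g j) (K j))
  (U : 'I_N -> JointAct Lmax Dmax -> R)
  (w v : 'I_N -> R -> R)
  (Hw : forall i, continuous_on_01 (w i)) :
  forall eps : R, (0 < eps)%R ->
  exists T0 : nat, (0 < T0)%N /\
    forall (Psi : forall j : 'I_N, State (Smax j) -> Act (Lmax j) (Dmax j) -> R)
           (mu0 : forall j : 'I_N, State (Smax j) -> R),
      (forall j, is_policy (Psi j)) ->
      (forall j, is_distr (mu0 j)) ->
      forall (i : 'I_N) (Vi : R),
        Un_cv (fun T => VT K U w v Psi mu0 i (S T)) Vi ->
        (Rabs (Vi - VT K U w v Psi mu0 i T0) < eps)%R.
Proof.
move=> eps Heps.
pose P i := constructive_indefinite_description _
   (@per_i N Smax Lmax Dmax g Hg Hlambda K HK U w v Hw i eps Heps).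
pose Ti i := proj1_sig (P i).
exists (\sum_(i < N) Ti i).+1; split => //.
move=> Psi mu0 HPsi Hmu i Vi Hcv.
apply: (proj2_sig (P i)) => //.
rewrite -/(Ti i) (bigD1 i) //=.
apply: leq_trans (leq_addr _ _) (leqnSn _).
Qed.
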